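(* Let $T$ be a rooted tree. (i) $I_1(T)>I_0(T)$. (ii) If $v$ is a leaf of $T$, then $3I_v(T)\ge I(T)+2$. (iii) If $v$ and $w$ are distinct leaves of $T$, then $3I_{vw}(T)\ge I_v(T)$.
   Context: A rooted tree $T$ is a finite tree with a distinguished vertex, its root (a one-vertex tree's root counts as a leaf). For vertices $u,v$, the infimum of $u$ and $v$ is the vertex common to the path from $u$ to the root and the path from $v$ to the root that is furthest from the root. A set $X\subseteq V(T)$ is infima closed if the infimum of any two elements of $X$ lies in $X$. $I(T)$ denotes the number of nonempty infima closed subsets of $V(T)$; $I_0(T)$ the number of nonempty infima closed sets not containing the root; $I_1(T)$ the number of infima closed sets containing the root; $I_v(T)$ the number of infima closed sets containing vertex $v$; $I_{vw}(T)$ the number containing both $v$ and $w$. *)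

(* Defs.v *)
(* A rooted tree on a finite vertex type V is given by a root
   r and a parent map par : V -> V with par r = r and every vertex reaching
   r by iterating par (so there are no other cycles). *)
From mathcomp Require Import all_boot.
Set Implicit Arguments. Unset Strict Implicit. Unset Printing Implicit Defensive.

Section RootedTree.
Variables (V : finType) (r : V) (par : V -> V).

(* u lies on the path from v to the root  <=>  fconnect par v u *)
Definition is_rooted_tree : Prop := par r = r /\ forall v : V, fconnect par v r.

Definition is_inf (x y w : V) : bool :=
  [&& fconnect par x w, fconnect par y w &
      [forall z, (fconnect par x z && fconnect par y z) ==> fconnect par w z]].

Definition infclosed (X : {set V}) : bool :=
  [forall x in X, forall y in X, forall w, is_inf x y w ==> (w \in X)].

(* leaf: no children (the root of a one-vertex tree is a leaf) *)
Definition is_leaf (v : V) : bool := [forall u, (u != r) ==> (par u != v)].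

Definition I_all : nat := #|[set X : {set V} | (X != set0) && infclosed X]|.
Definition I_0 : nat :=
  #|[set X : {set V} | [&& X != set0, r \notin X & infclosed X]]|.
Definition I_1 : nat := #|[set X : {set V} | (r \in X) && infclosed X]|.
Definition I_v (v : V) : nat := #|[set X : {set V} | (v \in X) && infclosed X]|.
Definition I_vw (v w : V) : nat :=
  #|[set X : {set V} | [&& v \in X, w \in X & infclosed X]]|.
End RootedTree.

(* Main.v *)
Require Import Defs.
From mathcomp Require Import all_boot.
From mathcomp Require Import zify.
Set Implicit Arguments. Unset Strict Implicit. Unset Printing Implicit Defensive.

Lemma fcon_iter (V : finType) (par : V -> V) x y :
  fconnect par x y -> exists n, y = iter n par x.
Proof. by move=> /iter_findex <-; eexists. Qed.

Lemma iter_fcon (V : finType) (par : V -> V) n x : fconnect par x (iter n par x).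
Proof. exact: fconnect_iter. Qed.

Lemma anc_antisym (V : finType) (r : V) par x y : is_rooted_tree r par ->
  fconnect par x y -> fconnect par y x -> x = y.
Proof.
case=> Hr Hall /fcon_iter [n ->] /fcon_iter [m Hm].
have Hx : forall t, iter ((m + n) * t) par x = x.
  elim=> [|t IH]; first by rewrite muln0.
  by rewrite mulnS iterD IH iterD -Hm.
have Hfix : forall j, iter j par r = r by elim=> //= j ->.
have [k Hk] := fcon_iter (Hall x).
have Hge : forall j, k <= j -> iter j par x = r.
  by move=> j Hj; rewrite -(subnK Hj) iterD -Hk Hfix.
case: (ltnP 0 (m + n)) => Hmn; last first.
  have -> : n = 0 by lia. by [].
have Hxr : x = r by rewrite -(Hx k) Hge // leq_pmull.
by rewrite Hxr Hfix.
Qed.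

Lemma anc_chain (V : finType) (par : V -> V) x y z :
  fconnect par x y -> fconnect par x z -> fconnect par y z || fconnect par z y.
Proof.
move=> /fcon_iter [a ->] /fcon_iter [b ->].
case: (leqP a b) => Hab.
  by rewrite -(subnK Hab) iterD iter_fcon.
by rewrite -(subnK (ltnW Hab)) iterD iter_fcon orbT.
Qed.

Lemma is_inf_sym (V : finType) par (x y c : V) : is_inf par x y c -> is_inf par y x c.
Proof.
case/and3P=> H1 H2 /forallP H3; apply/and3P; split=> //; apply/forallP=> z.
by rewrite andbC; exact: H3.
Qed.

Lemma inf_anc (V : finType) (r : V) par a b c : is_rooted_tree r par -> fconnect par a b ->
  is_inf par a b c -> c = b.
Proof.
move=> Ht Hab /and3P [_ Hbc /forallP H].
apply: (anc_antisym Ht) => //.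
by have := H b; rewrite Hab connect0 /=; exact: id.
Qed.

Lemma infclosed1 (V : finType) (r : V) par x : is_rooted_tree r par -> infclosed par [set x].
Proof.
move=> Ht; apply/forall_inP => a; rewrite inE => /eqP ->.
apply/forall_inP => b; rewrite inE => /eqP ->.
apply/forallP => c; apply/implyP => Hc.
by rewrite inE (inf_anc Ht (connect0 _ _) Hc).
Qed.

Definition goodu (V : finType) par (w : V) (X : {set V}) (u : V) : bool :=
  [&& fconnect par w u, [exists x0 in X, fconnect par x0 u] &
      [forall x in X, forall c, (fconnect par w c && fconnect par x c) ==> fconnect par u c]].
Definition fY (V : finType) par (w : V) (X : {set V}) : {set V} :=
  if [pick u | goodu par w X u] is Some u then X :|: [set w; u] else X :|: [set w].

Lemma goodu_ex (V : finType) (r : V) par w X : is_rooted_tree r par -> X != set0 ->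
  exists u, goodu par w X u.
Proof.
move=> [Hr Hall] /set0Pn [x0 Hx0].
have Hex : exists j, [exists x in X, fconnect par x (iter j par w)].
  have [k Hk] := fcon_iter (Hall w). exists k; apply/exists_inP; exists x0 => //.
  by rewrite -Hk; exact: Hall.
case: (ex_minnP Hex) => k /exists_inP [x1 Hx1 Hk] Hmin.
exists (iter k par w); apply/and3P; split.
- exact: iter_fcon.
- by apply/exists_inP; exists x1.
- apply/forall_inP => x Hx; apply/forallP => c; apply/implyP => /andP [Hwc Hxc].
  have [j Hj] := fcon_iter Hwc.
  have Hkj : k <= j by apply: Hmin; apply/exists_inP; exists x => //; rewrite -Hj.
  by rewrite Hj -(subnK Hkj) iterD iter_fcon.
Qed.

Lemma fY_spec (V : finType) (r : V) par w X : is_rooted_tree r par -> X != set0 ->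
  exists2 u, goodu par w X u & fY par w X = X :|: [set w; u].
Proof.
move=> Ht HX; rewrite /fY; case: pickP => [u Hu|Hno]; first by exists u.
have [u Hu] := goodu_ex w Ht HX. by rewrite Hno in Hu.
Qed.

Lemma keyL (V : finType) (r : V) par (X : {set V}) u x0 b c : is_rooted_tree r par ->
  infclosed par X -> x0 \in X -> fconnect par x0 u -> b \in X ->
  fconnect par u c -> fconnect par b c ->
  (forall z, fconnect par u z -> fconnect par b z -> fconnect par c z) ->
  (c \in X) || (c == u).
Proof.
move=> Ht HX Hx0 Hx0u Hb Huc Hbc Hz.
case Hbu: (fconnect par b u).
  by rewrite (anc_antisym Ht Huc (Hz u (connect0 _ _) Hbu)) eqxx orbT.
apply/orP; left.
move/forall_inP: HX => /(_ x0 Hx0) /forall_inP /(_ b Hb) /forallP /(_ c) /implyP; apply.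
apply/and3P; split.
- exact: connect_trans Hx0u Huc.
- exact: Hbc.
- apply/forallP => z; apply/implyP => /andP [Hx0z Hbz].
  case/orP: (anc_chain Hx0u Hx0z) => [Huz|Hzu].
  + exact: Hz.
  + by rewrite (connect_trans Hbz Hzu) in Hbu.
Qed.
Lemma fY_closed (V : finType) (r : V) par w X : is_rooted_tree r par -> X != set0 ->
  infclosed par X -> infclosed par (fY par w X).
Proof.
move=> Ht HX HXc.
have [u /and3P [Hwu /exists_inP [x0 Hx0 Hx0u] /forall_inP Hmin] ->] := fY_spec w Ht HX.
have Hmin' : forall x c, x \in X -> fconnect par w c -> fconnect par x c -> fconnect par u c.
  move=> x c Hx Hwc Hxc; move/forallP: (Hmin x Hx) => /(_ c) /implyP; apply.
  by rewrite Hwc.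
have Key : forall a b c, (a == w) || (a == u) -> b \in X :|: [set w; u] ->
    is_inf par a b c -> c \in X :|: [set w; u].
  move=> a b c Ha Hb Hc.
  rewrite !inE in Hb *.
  case/orP: Hb => [Hb|Hb].
  - have Hc' := Hc; case/and3P: Hc' => Hac Hbc /forallP Hz.
    have H : (c \in X) || (c == u).
      case/orP: Ha => /eqP Ha; subst a.
      + apply: (keyL Ht HXc Hx0 Hx0u Hb (Hmin' b c Hb Hac Hbc) Hbc).
        move=> z Huz Hbz; have := Hz z; rewrite (connect_trans Hwu Huz) Hbz /=; exact: id.
      + apply: (keyL Ht HXc Hx0 Hx0u Hb Hac Hbc).
        move=> z Huz Hbz; have := Hz z; rewrite Huz Hbz /=; exact: id.
    by case/orP: H => ->; rewrite ?orbT.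
  - have Hab : fconnect par a b || fconnect par b a.
      by case/orP: Ha => /eqP ->; case/orP: Hb => /eqP ->; rewrite ?connect0 ?Hwu ?orbT.
    case/orP: Hab => Hab.
    + by rewrite (inf_anc Ht Hab Hc) Hb orbT.
    + by rewrite (inf_anc Ht Hab (is_inf_sym Hc)) Ha orbT.
apply/forall_inP => a Ha; apply/forall_inP => b Hb; apply/forallP => c; apply/implyP => Hc.
have := Ha; rewrite !inE => /orP [HaX|Haw].
- have := Hb; rewrite !inE => /orP [HbX|Hbw].
  + move/forall_inP: HXc => /(_ a HaX) /forall_inP /(_ b HbX) /forallP /(_ c) /implyP /(_ Hc) HcX.
    by rewrite HcX.
  + by have := Key b a c Hbw Ha (is_inf_sym Hc); rewrite !inE.
- by have := Key a b c Haw Hb Hc; rewrite !inE.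
Qed.

Lemma goodu_mem (V : finType) par w (X : {set V}) u u' :
  infclosed par X -> goodu par w X u -> u' \in X -> fconnect par w u' -> fconnect par u' u -> u \in X.
Proof.
move=> HXc /and3P [Hwu /exists_inP [x1 Hx1 Hx1u] /forall_inP Hmin] Hu' Hwu' Hu'u.
move/forall_inP: HXc => /(_ x1 Hx1) /forall_inP /(_ u' Hu') /forallP /(_ u) /implyP; apply.
apply/and3P; split => //; apply/forallP => z; apply/implyP => /andP [Hx1z Hu'z].
move/forallP: (Hmin x1 Hx1) => /(_ z) /implyP; apply.
by rewrite Hx1z (connect_trans Hwu' Hu'z).
Qed.

Lemma flag_false (V : finType) (w u : V) (X Y : {set V}) : Y = X :|: [set w; u] -> w \notin X ->
  X != Y :\ w -> (u \notin X) /\ (u != w) /\ (forall x, (x \in X) = [&& x != u, x != w & x \in Y]).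
Proof.
move=> -> Hw Hne.
have Hu : u \notin X.
  apply: contra Hne => Hu; apply/eqP/setP => x; rewrite !inE.
  case: (eqVneq x w) => [->|Hxw] /=; first by rewrite (negbTE Hw).
  case: (eqVneq x u) => [->|] /=; by rewrite ?Hu ?orbT ?orbF.
have Huw : u != w.
  apply: contra Hne => /eqP Huw; apply/eqP/setP => x; rewrite !inE Huw orbb.
  case: (eqVneq x w) => [->|] /=; by rewrite ?(negbTE Hw) ?orbF.
split => //; split => // x; rewrite !inE.
case: (eqVneq x u) => [->|] /=; first by rewrite (negbTE Hu).
case: (eqVneq x w) => [->|] /=; first by rewrite (negbTE Hw).
by rewrite orbF.
Qed.
Lemma fY_inj (V : finType) (r : V) par w (X1 X2 : {set V}) : is_rooted_tree r par ->
  X1 != set0 -> w \notin X1 -> infclosed par X1 ->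
  X2 != set0 -> w \notin X2 -> infclosed par X2 ->
  fY par w X1 = fY par w X2 ->
  (X1 == fY par w X1 :\ w) = (X2 == fY par w X2 :\ w) -> X1 = X2.
Proof.
move=> Ht HX1 Hw1 HC1 HX2 Hw2 HC2 HY.
have [u1 Hg1 HY1] := fY_spec w Ht HX1.
have [u2 Hg2 HY2] := fY_spec w Ht HX2.
case E1: (X1 == _ :\ w) => /esym E2.
  by move/eqP: E1 => ->; move/eqP: E2 => ->; rewrite HY.
have [Hu1 [Hu1w HX1m]] := flag_false HY1 Hw1 (negbT E1).
have [Hu2 [Hu2w HX2m]] := flag_false HY2 Hw2 (negbT E2).
rewrite HY in HX1m.
have Hu2Y : u2 \in fY par w X2 by rewrite HY2 !inE eqxx !orbT.
have Hu1Y : u1 \in fY par w X2 by rewrite -HY HY1 !inE eqxx !orbT.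
case: (eqVneq u1 u2) => [Heq|Hne].
  by apply/setP => x; rewrite HX1m HX2m Heq.
have Hu2X1 : u2 \in X1 by rewrite HX1m eq_sym Hne Hu2w Hu2Y.
have Hu1X2 : u1 \in X2 by rewrite HX2m Hne Hu1w Hu1Y.
have Hwu1 : fconnect par w u1 by case/and3P: Hg1.
have Hwu2 : fconnect par w u2 by case/and3P: Hg2.
case/orP: (anc_chain Hwu1 Hwu2) => H.
- by rewrite (goodu_mem HC2 Hg2 Hu1X2 Hwu1 H) in Hu2.
- by rewrite (goodu_mem HC1 Hg1 Hu2X1 Hwu2 H) in Hu1.
Qed.

Lemma count_gen (V : finType) (r : V) par w (A B : {set {set V}}) : is_rooted_tree r par ->
  (forall X, X \in A -> [&& X != set0, w \notin X & infclosed par X]) ->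
  (forall X, X \in A -> fY par w X \in B) -> #|A| <= #|B| * 2.
Proof.
move=> Ht HA HB.
pose g X := (fY par w X, X == fY par w X :\ w).
have Hinj : {in A &, injective g}.
  move=> X1 X2 /HA /and3P [H1 H2 H3] /HA /and3P [H4 H5 H6] [E1 E2].
  exact: (fY_inj Ht H1 H2 H3 H4 H5 H6 E1 E2).
rewrite -(card_in_imset Hinj).
have -> : #|B| * 2 = #|setX B [set: bool]| by rewrite cardsX cardsT card_bool.
apply: subset_leq_card; apply/subsetP => p /imsetP [X HX ->].
by rewrite !inE /= HB.
Qed.

Theorem lemma2p4 (V : finType) (r : V) (par : V -> V) :
  is_rooted_tree r par ->
  [/\ I_0 r par < I_1 r par,
      forall v : V, is_leaf r par v -> 3 * I_v par v >= I_all par + 2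
    & forall v w : V, is_leaf r par v -> is_leaf r par w -> v != w ->
        3 * I_vw par v w >= I_v par v].
Proof.
move=> Ht; have [Hr Hall] := Ht.
split.
- rewrite /I_0 /I_1.
  set A0 := [set X | _]; set S1 := [set X | _].
  pose h (X : {set V}) := X :|: [set r].
  have Hinj : {in A0 &, injective h}.
    move=> X1 X2; rewrite !inE => /and3P [_ H1 _] /and3P [_ H2 _] E.
    apply/setP => x; move/setP/(_ x): E; rewrite !inE.
    case: (eqVneq x r) => [->|_]; by rewrite ?(negbTE H1) ?(negbTE H2) ?orbF.
  have Hcl : forall X, infclosed par X -> infclosed par (X :|: [set r]).
    move=> X HXc; apply/forall_inP => a Ha; apply/forall_inP => b Hb.
    apply/forallP => c; apply/implyP => Hc.
    rewrite !inE in Ha Hb *.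
    case/orP: Ha => [Ha|/eqP Ha].
    + case/orP: Hb => [Hb|/eqP Hb].
      * by move/forall_inP: HXc => /(_ a Ha) /forall_inP /(_ b Hb) /forallP /(_ c) /implyP /(_ Hc) ->.
      * subst b; move: Hc => /and3P [_ Hrc _].
        by rewrite (anc_antisym Ht (Hall c) Hrc) eqxx orbT.
    + subst a; move: Hc => /and3P [Hrc _ _].
      by rewrite (anc_antisym Ht (Hall c) Hrc) eqxx orbT.
  have HrS : [set r] \in S1 by rewrite inE set11 (infclosed1 r Ht).
  have Hsub : h @: A0 \subset S1 :\ [set r].
    apply/subsetP => Y /imsetP [X HX ->].
    move: HX; rewrite !inE => /and3P [HX0 HXr HXc].
    rewrite eqxx orbT /=; apply/andP; split; last by apply: Hcl.
    case/set0Pn: HX0 => x Hx.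
    apply/eqP => /setP /(_ x); rewrite !inE Hx /=.
    by move=> /esym /eqP Exr; rewrite -Exr Hx in HXr.
  have := subset_leq_card Hsub; rewrite (card_in_imset Hinj) (cardsD1 [set r] S1) HrS /=.
  lia.
- move=> v _.
  rewrite /I_all /I_v.
  set T := [set X : {set V} | (X != set0) && infclosed par X].
  set S := [set X : {set V} | (v \in X) && infclosed par X].
  set A := [set X : {set V} | [&& X != set0, v \notin X & infclosed par X]].
  have HT : #|T| = #|A| + #|S|.
    rewrite -(cardsID [set X : {set V} | v \in X] T) addnC; congr (_ + _); apply: eq_card => X;
      rewrite !inE.
    + by case: (v \in X); case: (X == set0); case: (infclosed par X).
    + case Hv: (v \in X); last by rewrite /= !andbF.
      have HX0 : X != set0 by apply/set0Pn; exists v.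
      by rewrite HX0 andbT.
  have HvS : [set v] \in S by rewrite inE set11 (infclosed1 v Ht).
  have Hc : #|A| <= #|S :\ [set v]| * 2.
    apply: (@count_gen V r par v A (S :\ [set v]) Ht); first by move=> Z; rewrite inE.
    move=> X; rewrite inE => /and3P [HX0 HXv HXc].
    have [u _ HY] := fY_spec v Ht HX0.
    rewrite !inE (fY_closed v Ht HX0 HXc) HY !inE eqxx orbT /= andbT.
    case/set0Pn: HX0 => x Hx.
    apply/eqP => /setP /(_ x); rewrite !inE Hx /=.
    by move=> /esym /eqP Exv; rewrite -Exv Hx in HXv.
  move: Hc; rewrite HT (cardsD1 [set v] S) HvS /=; lia.
- move=> v w _ _ _.
  rewrite /I_vw /I_v.
  set S := [set X : {set V} | (v \in X) && infclosed par X].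
  set B := [set X : {set V} | [&& v \in X, w \in X & infclosed par X]].
  set A := [set X : {set V} | [&& v \in X, w \notin X & infclosed par X]].
  have HS : #|S| = #|A| + #|B|.
    rewrite -(cardsID [set X : {set V} | w \in X] S) addnC; congr (_ + _); apply: eq_card => X;
      rewrite !inE.
    + by case: (v \in X); case: (w \in X); case: (infclosed par X).
    + by case: (v \in X); case: (w \in X); case: (infclosed par X).
  have Hc : #|A| <= #|B| * 2.
    apply: (@count_gen V r par w A B Ht).
      move=> X; rewrite inE => /and3P [HXv HXw HXc]; rewrite HXw HXc !andbT.
      by apply/set0Pn; exists v.
    move=> X; rewrite inE => /and3P [HXv HXw HXc].
    have HX0 : X != set0 by apply/set0Pn; exists v.
    have [u _ HY] := fY_spec w Ht HX0.
    by rewrite inE (fY_closed w Ht HX0 HXc) HY !inE HXv eqxx /= orbT.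
  rewrite HS; lia.
Qed.
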